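(* The function $F_2$ is given by the formula \begin{align*} F_2(z)=&\frac{1}{2}\frac{(1-\vert z\vert^2)^4}{\vert1-z\vert^2} +\frac{3}{2}\frac{(1-\vert z\vert^2)^5}{\vert1-z\vert^4} -\frac{3}{2}\frac{(1-\vert z\vert^2)^4}{\vert1-z\vert^4}\\ &+\frac{3}{2}\frac{(1-\vert z\vert^2)^6}{\vert1-z\vert^6} -\frac{3}{2}\frac{(1-\vert z\vert^2)^5}{\vert1-z\vert^6} +\frac{1}{2}\frac{(1-\vert z\vert^2)^7}{\vert1-z\vert^8}, \quad z\in\mathbb{D}. \end{align*}
   Context: Let $\mathbb{D}$ be the unit disc, $\mathbb{T}=\partial\mathbb{D}$ the unit circle, $\Delta=\partial^2/\partial z\partial\bar z$, and for $\gamma>-1$ let $w_\gamma(z)=(1-\lvert z\rvert^2)^\gamma$, $z\in\mathbb{D}$. For a smooth function $u$ in $\mathbb{D}$ write $u_r(e^{i\theta})=u(re^{i\theta})$ for $0\le r<1$. We say $u=f_0$ on $\mathbb{T}$ (with $f_0\in\mathcal{D}'(\mathbb{T})$) if $\lim_{r\to1}u_r=f_0$ in $\mathcal{D}'(\mathbb{T})$, and the inward normal derivative is $\partial_n u=\lim_{r\to1}(u_r-f_0)/(1-r)$ in $\mathcal{D}'(\mathbb{T})$ when the limit exists. The Poisson kernel $F_\gamma$ is the (unique) solution, in this distributional sense, of $\Delta w_\gamma^{-1}\Delta F_\gamma=0$ in $\mathbb{D}$, $F_\gamma=\delta_1$ on $\mathbb{T}$, $\partial_n F_\gamma=0$ on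 $\mathbb{T}$, where $\delta_1$ is the unit Dirac mass at $1\in\mathbb{T}$. Here $\gamma=2$. *)

(* Defs.v *)
From Stdlib Require Import Reals List.
From Coquelicot Require Import Coquelicot.
Open Scope R_scope.

(* Points of the plane: z = x + i y is represented by (x, y). *)
Definition in_disc (x y : R) : Prop := x ^ 2 + y ^ 2 < 1.

(* Iterated partial derivatives: true = d/dx, false = d/dy
   (the head of the list is the last derivative applied). *)
Fixpoint pd (l : list bool) (u : R -> R -> R) : R -> R -> R :=
  match l with
  | nil => u
  | b :: l' =>
      let v := pd l' u in
      if b then fun x y => Derive (fun t => v t y) x
      else fun x y => Derive (fun t => v x t) y
  end.

Definition smooth_in_disc (u : R -> R -> R) : Prop :=
  forall (l : list bool) (x y : R), in_disc x y ->
    ex_derive (fun t => pd l u t y) x /\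
    ex_derive (fun t => pd l u x t) y /\
    continuous (fun p : R * R => pd l u (fst p) (snd p)) (x, y).

(* Delta = d^2/(dz dzbar) = (1/4)(d_xx + d_yy). *)
Definition Delta (u : R -> R -> R) : R -> R -> R :=
  fun x y => / 4 * (pd (true :: true :: nil) u x y + pd (false :: false :: nil) u x y).

Definition w (gamma : R) (x y : R) : R := Rpower (1 - (x ^ 2 + y ^ 2)) gamma.

Definition test_fun (phi : R -> R) : Prop :=
  (forall n x, ex_derive_n phi n x) /\ (forall x, phi (x + 2 * PI) = phi x).

(* Pairing of u_r (u_r(e^{i theta}) = u(r e^{i theta})) with a test function,
   with respect to normalized arc length d theta / (2 pi) on T. *)
Definition pair_r (u : R -> R -> R) (r : R) (phi : R -> R) : R :=
  RInt (fun th => u (r * cos th) (r * sin th) * phi th) (- PI) PI / (2 * PI).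

(* The Dirac mass at 1 = e^{i 0}. *)
Definition delta1 (phi : R -> R) : R := phi 0.

(* u = delta_1 on T : u_r -> delta_1 in D'(T) as r -> 1. *)
Definition bv_delta1 (u : R -> R -> R) : Prop :=
  forall phi, test_fun phi ->
    filterlim (fun r => pair_r u r phi) (at_left 1) (locally (delta1 phi)).

(* d_n u = 0 on T : (u_r - delta_1)/(1 - r) -> 0 in D'(T). *)
Definition normal_deriv_zero (u : R -> R -> R) : Prop :=
  forall phi, test_fun phi ->
    filterlim (fun r => (pair_r u r phi - delta1 phi) / (1 - r))
      (at_left 1) (locally 0).

Definition is_poisson_kernel (gamma : R) (u : R -> R -> R) : Prop :=
  smooth_in_disc u /\
  (forall x y, in_disc x y ->
     Delta (fun a b => / w gamma a b * Delta u a b) x y = 0) /\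
  bv_delta1 u /\
  normal_deriv_zero u.

Definition F2_formula (x y : R) : R :=
  let s := 1 - (x ^ 2 + y ^ 2) in
  let d := (1 - x) ^ 2 + y ^ 2 in
  / 2 * (s ^ 4 / d) + 3 / 2 * (s ^ 5 / d ^ 2) - 3 / 2 * (s ^ 4 / d ^ 2)
  + 3 / 2 * (s ^ 6 / d ^ 3) - 3 / 2 * (s ^ 5 / d ^ 3) + / 2 * (s ^ 7 / d ^ 4).

(* Main.v *)
Require Import Defs.
From Stdlib Require Import Reals List Lra Lia.
From Coquelicot Require Import Coquelicot.
Open Scope R_scope.
Record term := Tm { tc : R; ti : nat; tj : nat; ta : nat; tb : nat }.
Definition sv (x y : R) := 1 - (x^2+y^2).
Definition dv (x y : R) := (1-x)^2 + y^2.
Definition tv (T : term) (x y : R) : R :=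
  tc T * x ^ ti T * y ^ tj T * sv x y ^ ta T * / dv x y ^ tb T.
Definition dxT (T : term) : list term :=
  match T with Tm c i j a b =>
   Tm (c * INR i) (pred i) j a b :: Tm (-2 * c * INR a) (S i) j (pred a) b ::
   Tm (2 * c * INR b) i j a (S b) :: Tm (-2 * c * INR b) (S i) j a (S b) :: nil end.
Definition dyT (T : term) : list term :=
  match T with Tm c i j a b =>
   Tm (c * INR j) i (pred j) a b :: Tm (-2 * c * INR a) i (S j) (pred a) b ::
   Tm (-2 * c * INR b) i (S j) a (S b) :: nil end.
Fixpoint ev (L : list term) (x y : R) : R :=
  match L with nil => 0 | T :: L' => tv T x y + ev L' x y end.

Lemma pow_S_pred (x : R) (n : nat) : (0 < n)%nat -> x ^ n = x * x ^ pred n.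
Proof. destruct n; [lia|reflexivity]. Qed.

Lemma dxT_ok T x y : dv x y <> 0 ->
  is_derive (fun t => tv T t y) x (ev (dxT T) x y).
Proof.
  intros H. destruct T as [c i j a b]. unfold tv, ev, dxT.
  unfold sv at 1, dv at 1. auto_derive.
  - replace ((1 + - x) * ((1 + - x) * 1) + y * (y * 1)) with (dv x y) by (unfold dv; ring).
    apply pow_nonzero. exact H.
  - replace ((1 + - x) * ((1 + - x) * 1) + y * (y * 1)) with (dv x y) by (unfold dv; ring).
    replace (1 + - (x * (x * 1) + y * (y * 1))) with (sv x y) by (unfold sv; ring).
    replace (- (1) * ((1 + - x) * 1) + (1 + - x) * (- (1) * 1)) with (-2*(1-x)) by ring.
    unfold tv; simpl tc; simpl ti; simpl tj; simpl ta; simpl tb.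
    generalize (sv x y) (dv x y) H; intros S D HD.
    destruct i; destruct a; destruct b; simpl pred; simpl pow; simpl INR; field; auto using pow_nonzero.
Qed.

Lemma dyT_ok T x y : dv x y <> 0 ->
  is_derive (fun t => tv T x t) y (ev (dyT T) x y).
Proof.
  intros H. destruct T as [c i j a b]. unfold tv, ev, dyT.
  unfold sv at 1, dv at 1. auto_derive.
  - replace ((1 - x) * ((1 - x) * 1) + y * (y * 1)) with (dv x y) by (unfold dv; ring).
    apply pow_nonzero. exact H.
  - replace ((1 - x) * ((1 - x) * 1) + y * (y * 1)) with (dv x y) by (unfold dv; ring).
    replace (1 + - (x * (x * 1) + y * (y * 1))) with (sv x y) by (unfold sv; ring).
    unfold tv; simpl tc; simpl ti; simpl tj; simpl ta; simpl tb.
    generalize (sv x y) (dv x y) H; intros S D HD.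
    destruct j; destruct a; destruct b; simpl pred; simpl pow; simpl INR; field; auto using pow_nonzero.
Qed.

Definition dxL (L : list term) := flat_map dxT L.
Definition dyL (L : list term) := flat_map dyT L.

Lemma ev_app L1 L2 x y : ev (L1 ++ L2) x y = ev L1 x y + ev L2 x y.
Proof. induction L1; simpl; [ring| rewrite IHL1; ring]. Qed.

Lemma dxL_ok L x y : dv x y <> 0 ->
  is_derive (fun t => ev L t y) x (ev (dxL L) x y).
Proof.
  intros H; induction L as [|T L IH]; simpl.
  - auto_derive; auto.
  - unfold dxL in *; simpl. rewrite ev_app. apply (is_derive_plus (fun t => tv T t y) (fun t => ev L t y)); [apply dxT_ok|]; auto.
Qed.

Lemma dyL_ok L x y : dv x y <> 0 ->
  is_derive (fun t => ev L x t) y (ev (dyL L) x y).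
Proof.
  intros H; induction L as [|T L IH]; simpl.
  - auto_derive; auto.
  - unfold dyL in *; simpl. rewrite ev_app. apply (is_derive_plus (fun t => tv T x t) (fun t => ev L x t)); [apply dyT_ok|]; auto.
Qed.

Lemma cont_pow {U : UniformSpace} (f : U -> R) (p : U) n :
  continuous f p -> continuous (fun q => f q ^ n) p.
Proof.
  intros Hf; induction n; simpl.
  - apply continuous_const.
  - apply (continuous_mult f (fun q => f q ^ n)); auto.
Qed.

Lemma ev_cont L x y : dv x y <> 0 ->
  continuous (fun p : R * R => ev L (fst p) (snd p)) (x, y).
Proof.
  intros H; induction L as [|T L IH]; simpl.
  - apply continuous_const.
  - apply (continuous_plus (fun p : R*R => tv T (fst p) (snd p)) (fun p : R * R => ev L (fst p) (snd p))); auto.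
    destruct T as [c i j a b]; unfold tv; simpl.
    assert (Hx : continuous (fun p : R*R => fst p) (x,y)) by apply continuous_fst.
    assert (Hy : continuous (fun p : R*R => snd p) (x,y)) by apply continuous_snd.
    apply (continuous_mult (fun p : R*R => c * fst p ^ i * snd p ^ j * sv (fst p) (snd p) ^ a)).
    apply (continuous_mult (fun p : R*R => c * fst p ^ i * snd p ^ j)).
    apply (continuous_mult (fun p : R*R => c * fst p ^ i)).
    apply (continuous_mult (fun p : R*R => c)). apply continuous_const.
    apply cont_pow; auto. apply cont_pow; auto.
    apply cont_pow. unfold sv.
    apply (continuous_plus (fun p : R*R => 1) (fun p : R*R => - (fst p ^2 + snd p ^2))).
    apply continuous_const. apply (continuous_opp (fun p : R*R => (fst p ^2 + snd p ^2))).
    apply (continuous_plus (fun p : R*R => fst p ^2) (fun p : R*R => snd p ^2)); apply cont_pow; auto.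
    apply (continuous_comp (fun p : R*R => dv (fst p) (snd p) ^ b) Rinv).
    apply cont_pow. unfold dv.
    apply (continuous_plus (fun p : R*R => (1 - fst p) ^2) (fun p : R*R => snd p ^2)); apply cont_pow; auto.
    apply (continuous_plus (fun p : R*R => 1) (fun p : R*R => - fst p)). apply continuous_const.
    apply (continuous_opp (fun p : R*R => fst p)); auto.
    apply continuous_Rinv. simpl. apply pow_nonzero; auto.
Qed.
Definition L0 : list term :=
  Tm (/2) 0 0 4 1 :: Tm (3/2) 0 0 5 2 :: Tm (-(3/2)) 0 0 4 2 :: Tm (3/2) 0 0 6 3 ::
  Tm (-(3/2)) 0 0 5 3 :: Tm (/2) 0 0 7 4 :: nil.
Definition LH : list term :=
  Tm 12 0 6 0 5 :: Tm (-60) 2 4 0 5 :: Tm 180 1 4 0 5 :: Tm (-120) 0 4 0 5 ::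
  Tm (-60) 4 2 0 5 :: Tm 120 3 2 0 5 :: Tm (-120) 1 2 0 5 :: Tm 60 0 2 0 5 ::
  Tm 12 6 0 0 5 :: Tm (-60) 5 0 0 5 :: Tm 120 4 0 0 5 :: Tm (-120) 3 0 0 5 ::
  Tm 60 2 0 0 5 :: Tm (-12) 1 0 0 5 :: nil.
Lemma harm x y : dv x y <> 0 -> ev (dxL (dxL LH)) x y + ev (dyL (dyL LH)) x y = 0.
Proof. intros H. set (H' := H). unfold dxL, dyL, LH. simpl flat_map. unfold ev, tv. simpl tc; simpl ti; simpl tj; simpl ta; simpl tb.
 unfold sv, dv in *. simpl pow. simpl INR. simpl pred. field; repeat split; intro Hc; first [apply H; rewrite <- Hc; ring | apply H'; rewrite <- Hc; ring]. Qed.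
Lemma lapF x y : dv x y <> 0 -> sv x y <> 0 -> / sv x y ^ 2 * (/ 4 * (ev (dxL (dxL L0)) x y + ev (dyL (dyL L0)) x y)) = ev LH x y.
Proof. intros H H'. unfold dxL, dyL, LH, L0. simpl flat_map. unfold ev, tv. simpl tc; simpl ti; simpl tj; simpl ta; simpl tb.
 unfold sv, dv in *. simpl pow. simpl INR. simpl pred. field; repeat split; intro Hc; first [apply H; rewrite <- Hc; ring | apply H'; rewrite <- Hc; ring]. Qed.

Lemma loc_lt1 {U : UniformSpace} (f : U -> R) p :
  continuous f p -> f p < 1 -> locally p (fun q => f q < 1).
Proof. intros Hc Hp. apply (Hc (fun u => u < 1)). apply open_lt; auto. Qed.

Lemma disc_dv x y : in_disc x y -> dv x y <> 0.
Proof. unfold in_disc, dv. intros H Hc. nra. Qed.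
Lemma disc_sv x y : in_disc x y -> 0 < sv x y.
Proof. unfold in_disc, sv. intros H. lra. Qed.

Lemma disc_loc2 x y : in_disc x y -> locally (x, y) (fun p : R * R => in_disc (fst p) (snd p)).
Proof.
  intros H. unfold in_disc.
  apply (loc_lt1 (fun p : R * R => fst p ^ 2 + snd p ^ 2)); [|exact H].
  apply (continuous_plus (fun p : R*R => fst p ^2) (fun p : R*R => snd p ^2));
    apply cont_pow; [apply continuous_fst | apply continuous_snd].
Qed.

Lemma disc_locx x y : in_disc x y -> locally x (fun t => in_disc t y).
Proof.
  intros H. unfold in_disc.
  apply (loc_lt1 (fun t : R => t ^ 2 + y ^ 2)); [|exact H].
  apply (continuous_plus (fun t : R => t ^2) (fun t : R => y ^2)).
  apply cont_pow; apply continuous_id. apply continuous_const.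
Qed.

Lemma disc_locy x y : in_disc x y -> locally y (fun t => in_disc x t).
Proof.
  intros H. unfold in_disc.
  apply (loc_lt1 (fun t : R => x ^ 2 + t ^ 2)); [|exact H].
  apply (continuous_plus (fun t : R => x ^2) (fun t : R => t ^2)).
  apply continuous_const. apply cont_pow; apply continuous_id.
Qed.

Definition DE (f : R -> R -> R) (L : list term) :=
  forall x y, in_disc x y -> f x y = ev L x y.

Fixpoint dL (l : list bool) (L : list term) : list term :=
  match l with nil => L | b :: l' => if b then dxL (dL l' L) else dyL (dL l' L) end.

Lemma DE_pd f L l : DE f L -> DE (pd l f) (dL l L).
Proof.
  intros HD; induction l as [|b l IH]; simpl; [exact HD|].
  destruct b; intros x y Hxy.
  - rewrite (Derive_ext_loc _ (fun t => ev (dL l L) t y)).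
    + apply is_derive_unique, dxL_ok, disc_dv, Hxy.
    + eapply filter_imp; [|apply disc_locx, Hxy]. intros t Ht. apply IH, Ht.
  - rewrite (Derive_ext_loc _ (fun t => ev (dL l L) x t)).
    + apply is_derive_unique, dyL_ok, disc_dv, Hxy.
    + eapply filter_imp; [|apply disc_locy, Hxy]. intros t Ht. apply IH, Ht.
Qed.

Lemma DE_smooth f L : DE f L -> smooth_in_disc f.
Proof.
  intros HD l x y Hxy. pose proof (DE_pd f L l HD) as H.
  split; [|split].
  - apply (ex_derive_ext_loc (fun t => ev (dL l L) t y)).
    + eapply filter_imp; [|apply disc_locx, Hxy]. intros t Ht. symmetry; apply H, Ht.
    + eexists; apply dxL_ok, disc_dv, Hxy.
  - apply (ex_derive_ext_loc (fun t => ev (dL l L) x t)).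
    + eapply filter_imp; [|apply disc_locy, Hxy]. intros t Ht. symmetry; apply H, Ht.
    + eexists; apply dyL_ok, disc_dv, Hxy.
  - apply (continuous_ext_loc _ (fun p : R * R => ev (dL l L) (fst p) (snd p))).
    + eapply filter_imp; [|apply disc_loc2, Hxy]. intros p Hp. symmetry; apply H, Hp.
    + apply ev_cont, disc_dv, Hxy.
Qed.

Lemma F2_L0 : DE F2_formula L0.
Proof.
  intros x y Hxy. pose proof (disc_dv x y Hxy) as H. unfold F2_formula, L0, ev, tv.
  simpl. unfold sv, dv in *. field; repeat split; intro Hc; apply H; rewrite <- Hc; ring.
Qed.

Lemma F2_smooth : smooth_in_disc F2_formula.
Proof. exact (DE_smooth _ _ F2_L0). Qed.

Lemma F2_pde : forall x y, in_disc x y ->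
  Defs.Delta (fun a b => / Defs.w 2 a b * Defs.Delta F2_formula a b) x y = 0.
Proof.
  assert (HI : DE (fun a b => / Defs.w 2 a b * Defs.Delta F2_formula a b) LH).
  { intros a b Hab. unfold Defs.Delta.
    rewrite (DE_pd _ _ (true :: true :: nil) F2_L0 a b Hab).
    rewrite (DE_pd _ _ (false :: false :: nil) F2_L0 a b Hab).
    unfold Defs.w. replace 2 with (INR 2) by (simpl; ring).
    rewrite Rpower_pow; [|apply disc_sv, Hab].
    simpl dL. replace (1 - (a ^ 2 + b ^ 2)) with (sv a b) by reflexivity.
    apply lapF; [apply disc_dv, Hab| apply Rgt_not_eq, disc_sv, Hab]. }
  intros x y Hxy. unfold Defs.Delta at 1.
  rewrite (DE_pd _ _ (true :: true :: nil) HI x y Hxy).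
  rewrite (DE_pd _ _ (false :: false :: nil) HI x y Hxy).
  simpl dL. rewrite harm; [ring| apply disc_dv, Hxy].
Qed.


Definition Frc (r c : R) : R :=
  let s := 1 - r ^ 2 in
  let d := 1 + r ^ 2 - 2 * r * c in
  / 2 * (s ^ 4 / d) + 3 / 2 * (s ^ 5 / d ^ 2) - 3 / 2 * (s ^ 4 / d ^ 2)
  + 3 / 2 * (s ^ 6 / d ^ 3) - 3 / 2 * (s ^ 5 / d ^ 3) + / 2 * (s ^ 7 / d ^ 4).

Lemma sc1 t : sin t ^ 2 + cos t ^ 2 = 1.
Proof. pose proof (sin2_cos2 t) as H. unfold Rsqr in H. rewrite <- H. ring. Qed.

Lemma F2_polar r t : F2_formula (r * cos t) (r * sin t) = Frc r (cos t).
Proof.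
  pose proof (sc1 t) as H.
  assert (E1 : 1 - ((r * cos t) ^ 2 + (r * sin t) ^ 2) = 1 - r ^ 2).
  { transitivity (1 - r ^ 2 * (sin t ^ 2 + cos t ^ 2)); [ring| rewrite H; ring]. }
  assert (E2 : (1 - r * cos t) ^ 2 + (r * sin t) ^ 2 = 1 + r ^ 2 - 2 * r * cos t).
  { transitivity (1 - 2 * r * cos t + r ^ 2 * (sin t ^ 2 + cos t ^ 2)); [ring| rewrite H; ring]. }
  unfold F2_formula, Frc. cbv zeta. rewrite E1, E2. reflexivity.
Qed.

Lemma d_pos r c : 0 <= r < 1 -> -1 <= c <= 1 -> (1 - r) ^ 2 <= 1 + r ^ 2 - 2 * r * c.
Proof. intros. nra. Qed.
Lemma d_pos' r c : 0 <= r < 1 -> -1 <= c <= 1 -> 0 < 1 + r ^ 2 - 2 * r * c.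
Proof. intros. nra. Qed.

Lemma is_derive_atan v : is_derive atan v (/ (1 + v ^ 2)).
Proof. apply is_derive_Reals, derivable_pt_lim_atan. Qed.

Lemma is_derive_eq (f : R -> R) x l l' : is_derive f x l -> l = l' -> is_derive f x l'.
Proof. intros H E; subst; exact H. Qed.

Lemma Phi_deriv r t : 0 <= r < 1 ->
  is_derive (fun t => t + 2 * atan (r * sin t / (1 - r * cos t))) t
    ((1 - r ^ 2) / (1 + r ^ 2 - 2 * r * cos t)).
Proof.
  intros Hr. pose proof (COS_bound t) as Hc. pose proof (sc1 t) as H.
  assert (Hq : 0 < 1 - r * cos t) by nra.
  assert (Hu : is_derive (fun t => r * sin t / (1 - r * cos t)) t
     ((r * cos t * (1 - r * cos t) - r * sin t * (r * sin t)) / (1 - r * cos t) ^ 2)).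
  { auto_derive. lra. field. lra. }
  pose proof (is_derive_comp atan (fun t => r * sin t / (1 - r * cos t)) t _ _
     (is_derive_atan _) Hu) as Hc2.
  eapply is_derive_eq.
  { apply (is_derive_plus (fun t => t) (fun t => 2 * atan (r * sin t / (1 - r * cos t)))).
    apply is_derive_id. apply (is_derive_scal (fun t => atan (r * sin t / (1 - r * cos t)))).
    exact Hc2. }
  unfold plus, scal, one, mult; simpl. unfold mult; simpl.
  generalize (sin t) (cos t) H Hq; intros S C HSC HQ.
  replace (1 - r * (r * 1)) with (1 - r ^ 2 * (S ^ 2 + C ^ 2)) by (rewrite HSC; ring).
  replace (1 + r * (r * 1) - 2 * r * C) with ((1 - r * C) ^ 2 + (r * S) ^ 2)
    by (transitivity (1 - 2 * r * C + r ^ 2 * (S ^ 2 + C ^ 2)); [ring | rewrite HSC; ring]).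
  assert (0 < (1 - r * C) ^ 2 + (r * S) ^ 2) by nra.
  field. split; [lra|]. intro Hc3. nra.
Qed.

Lemma cont_d r t : 0 <= r < 1 -> 1 + r ^ 2 - 2 * r * cos t <> 0.
Proof. intros Hr. pose proof (COS_bound t). apply Rgt_not_eq. apply d_pos'; auto. Qed.

Lemma int_P r : 0 <= r < 1 ->
  is_RInt (fun t => (1 - r ^ 2) / (1 + r ^ 2 - 2 * r * cos t)) (- PI) PI (2 * PI).
Proof.
  intros Hr.
  assert (H := is_RInt_derive (fun t => t + 2 * atan (r * sin t / (1 - r * cos t)))
     (fun t => (1 - r ^ 2) / (1 + r ^ 2 - 2 * r * cos t)) (- PI) PI).
  replace (2 * PI) with (minus (PI + 2 * atan (r * sin PI / (1 - r * cos PI)))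
      (- PI + 2 * atan (r * sin (- PI) / (1 - r * cos (- PI))))).
  - apply H.
    + intros x _. apply Phi_deriv; auto.
    + intros x _. apply (ex_derive_continuous (fun t => (1 - r ^ 2) / (1 + r ^ 2 - 2 * r * cos t))). auto_derive. apply cont_d; auto.
  - rewrite sin_neg, sin_PI, cos_neg, cos_PI.
    replace (r * 0 / (1 - r * -1)) with 0 by (unfold Rdiv; ring).
    replace (r * - 0 / (1 - r * -1)) with 0 by (unfold Rdiv; ring).
    rewrite atan_0. unfold minus, plus, opp; simpl; ring.
Qed.

Lemma sin_g_deriv (g g' : R -> R) t : is_derive g (cos t) (g' (cos t)) ->
  is_derive (fun t => sin t * g (cos t)) t (cos t * g (cos t) - (1 - cos t ^ 2) * g' (cos t)).
Proof.
  intros Hg. eapply is_derive_eq.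
  - apply (is_derive_mult (fun t => sin t) (fun t => g (cos t))).
    + auto_derive; auto; try ring.
    + apply (is_derive_comp g cos t). exact Hg. auto_derive; auto; try ring.
    + intros; apply Rmult_comm.
  - unfold plus, scal, mult; simpl. unfold mult; simpl.
    replace (1 - cos t * (cos t * 1)) with (sin t * sin t) by (pose proof (sc1 t); nra). ring.
Qed.

Definition Rp (r c : R) : R :=
  (3 * r - 10 / 3 * r ^ 3 + 2 * r ^ 5 - 2 * r ^ 7 + / 3 * r ^ 9)
  + (-9 * r ^ 2 + 11 * r ^ 4 - 3 * r ^ 6 + r ^ 8) * c
  + (22 / 3 * r ^ 3 - 12 * r ^ 5 + 6 * r ^ 7 - 4 / 3 * r ^ 9) * c ^ 2.
Definition Rp' (r c : R) : R :=
  (-9 * r ^ 2 + 11 * r ^ 4 - 3 * r ^ 6 + r ^ 8)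
  + 2 * (22 / 3 * r ^ 3 - 12 * r ^ 5 + 6 * r ^ 7 - 4 / 3 * r ^ 9) * c.
Definition gR (r c : R) := Rp r c / (1 + r ^ 2 - 2 * r * c) ^ 3.
Definition gR' (r c : R) :=
  (Rp' r c * (1 + r ^ 2 - 2 * r * c) + 6 * r * Rp r c) / (1 + r ^ 2 - 2 * r * c) ^ 4.

Lemma gR_deriv r c : 1 + r ^ 2 - 2 * r * c <> 0 -> is_derive (gR r) c (gR' r c).
Proof.
  intros H. unfold gR, gR', Rp, Rp'. auto_derive.
  - repeat apply prod_neq_R0; try lra; intro Hc; apply H; rewrite <- Hc; ring.
  - field. exact H.
Qed.

Lemma F_identity r c : 1 + r ^ 2 - 2 * r * c <> 0 ->
  (1 - r ^ 2) / (1 + r ^ 2 - 2 * r * c) + (c * gR r c - (1 - c ^ 2) * gR' r c) = Frc r c.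
Proof.
  intros H. unfold gR, gR', Rp, Rp', Frc. cbv zeta. field. exact H.
Qed.

Ltac nz H := repeat split; try (repeat apply prod_neq_R0); try lra;
  try (let Hc := fresh in intro Hc; apply H; rewrite <- Hc; ring).

Lemma Frc_ex_derive r c : 1 + r ^ 2 - 2 * r * c <> 0 -> ex_derive (Frc r) c.
Proof. intros H. unfold Frc. auto_derive. nz H. Qed.

Lemma Frc_cos_cont r t : 0 <= r < 1 -> continuous (fun t => Frc r (cos t)) t.
Proof.
  intros Hr. apply (continuous_comp cos (Frc r)).
  - apply (ex_derive_continuous cos). auto_derive; auto.
  - apply (ex_derive_continuous (Frc r)). apply Frc_ex_derive, cont_d; auto.
Qed.

Lemma int_F r : 0 <= r < 1 -> is_RInt (fun t => Frc r (cos t)) (- PI) PI (2 * PI).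
Proof.
  intros Hr.
  assert (H := is_RInt_derive
     (fun t => (t + 2 * atan (r * sin t / (1 - r * cos t))) + sin t * gR r (cos t))
     (fun t => Frc r (cos t)) (- PI) PI).
  replace (2 * PI) with (minus ((PI + 2 * atan (r * sin PI / (1 - r * cos PI))) + sin PI * gR r (cos PI))
      ((- PI + 2 * atan (r * sin (- PI) / (1 - r * cos (- PI)))) + sin (-PI) * gR r (cos (- PI)))).
  - apply H.
    + intros x _. eapply is_derive_eq.
      * apply (is_derive_plus (fun t => t + 2 * atan (r * sin t / (1 - r * cos t)))
                              (fun t => sin t * gR r (cos t))).
        apply Phi_deriv; auto.
        apply (sin_g_deriv (gR r) (gR' r)). apply gR_deriv, cont_d; auto.
      * unfold plus; simpl. apply F_identity, cont_d; auto.
    + intros x _. apply Frc_cos_cont; auto.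
  - rewrite sin_neg, sin_PI, cos_neg, cos_PI.
    replace (r * 0 / (1 - r * -1)) with 0 by (unfold Rdiv; ring).
    replace (r * - 0 / (1 - r * -1)) with 0 by (unfold Rdiv; ring).
    rewrite atan_0. unfold minus, plus, opp; simpl; ring.
Qed.

Lemma odd_int (f : R -> R) : ex_RInt f (- PI) PI -> (forall t, f (- t) = - f t) ->
  RInt f (- PI) PI = 0.
Proof.
  intros Hex Hodd.
  assert (Hs : ex_RInt f PI (- PI)) by (apply ex_RInt_swap; exact Hex).
  assert (E := RInt_comp_lin f (-1) 0 (- PI) PI).
  replace (-1 * - PI + 0) with PI in E by ring.
  replace (-1 * PI + 0) with (- PI) in E by ring.
  specialize (E Hs).
  rewrite (RInt_ext (fun y => scal (-1) (f (-1 * y + 0))) f) in E.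
  - rewrite <- (opp_RInt_swap f (- PI) PI Hex) in E.
    unfold opp in E; simpl in E. lra.
  - intros x _. replace (-1 * x + 0) with (- x) by ring. rewrite Hodd.
    unfold scal; simpl; unfold mult; simpl; ring.
Qed.

Lemma cos_quad_pos t : 0 <= t <= PI -> t ^ 2 <= 16 * (1 - cos t).
Proof.
  intros [H0 H1]. pose proof PI_4. pose proof PI_RGT_0.
  destruct (Rle_lt_dec t 2) as [Ht|Ht].
  - destruct (pre_cos_bound t 0) as [_ Hc]; [lra|lra|].
    unfold cos_approx, cos_term in Hc. simpl in Hc.
    assert (Hc2 : cos t <= 1 - t ^ 2 / 2 + t ^ 4 / 24) by (eapply Rle_trans; [exact Hc| right; field]).
    assert (t ^ 4 <= 4 * t ^ 2). { replace (t ^ 4) with (t ^ 2 * t ^ 2) by ring. rewrite (Rmult_comm 4). apply Rmult_le_compat_l; [apply pow2_ge_0| replace 4 with (2 ^ 2) by ring; apply pow_incr; lra]. } pose proof (pow2_ge_0 t). lra.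
  - assert (cos t <= 0) by (apply cos_le_0; lra). nra.
Qed.

Lemma cos_quad t : - PI <= t <= PI -> t ^ 2 <= 16 * (1 - cos t).
Proof.
  intros H. destruct (Rle_lt_dec 0 t).
  - apply cos_quad_pos; lra.
  - replace (t ^ 2) with ((- t) ^ 2) by ring. rewrite <- (cos_neg t). apply cos_quad_pos; lra.
Qed.

Lemma der_cont (f df : R -> R) x : is_derive f x (df x) -> continuity_pt f x.
Proof.
  intros H. apply continuity_pt_filterlim. apply (ex_derive_continuous f). eexists; exact H.
Qed.

Lemma psi_bound (phi : R -> R) : (forall n x, ex_derive_n phi n x) ->
  exists M, 0 <= M /\ forall t, - PI <= t <= PI ->
   Rabs (phi t - phi 0 - Derive phi 0 * sin t) <= M * t ^ 2.
Proof.
  intros Hphi. set (a1 := Derive phi 0).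
  assert (HD1 : forall x, is_derive phi x (Derive phi x)).
  { intros x. apply Derive_correct. exact (Hphi 1%nat x). }
  assert (HD2 : forall x, is_derive (Derive phi) x (Derive_n phi 2 x)).
  { intros x. apply Derive_correct. exact (Hphi 2%nat x). }
  assert (HC2 : forall x, continuous (Derive_n phi 2) x).
  { intros x. apply (ex_derive_continuous (Derive_n phi 2)). exact (Hphi 3%nat x). }
  destruct (continuity_ab_maj (fun x => Rabs (Derive_n phi 2 x)) (- PI) PI) as [Mx [HM _]].
  { pose proof PI_RGT_0; lra. }
  { intros c _. apply continuity_pt_filterlim. apply (continuous_Rabs_comp (Derive_n phi 2)). apply HC2. }
  set (B := Rabs (Derive_n phi 2 Mx) + Rabs a1).
  exists B. split; [unfold B; pose proof (Rabs_pos a1); pose proof (Rabs_pos (Derive_n phi 2 Mx)); lra|].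
  intros t Ht.
  set (psi := fun x => phi x - phi 0 - a1 * sin x).
  set (psi1 := fun x => Derive phi x - a1 * cos x).
  set (psi2 := fun x => Derive_n phi 2 x + a1 * sin x).
  assert (Hp1 : forall x, is_derive psi x (psi1 x)).
  { intros x. unfold psi, psi1. eapply is_derive_eq.
    - apply (is_derive_minus (fun x => phi x - phi 0) (fun x => a1 * sin x)).
      apply (is_derive_minus phi (fun _ => phi 0)). apply HD1. apply is_derive_const.
      apply (is_derive_scal sin). apply is_derive_Reals, derivable_pt_lim_sin.
    - unfold minus, plus, opp, scal, zero; simpl. unfold mult; simpl. ring. }
  assert (Hp2 : forall x, is_derive psi1 x (psi2 x)).
  { intros x. unfold psi1, psi2. eapply is_derive_eq.
    - apply (is_derive_minus (Derive phi) (fun x => a1 * cos x)).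
      apply HD2.
      apply (is_derive_scal cos). apply is_derive_Reals, derivable_pt_lim_cos.
    - unfold minus, plus, opp, scal; simpl. unfold mult; simpl. ring. }
  assert (Hb : forall x, - PI <= x <= PI -> Rabs (psi2 x) <= B).
  { intros x Hx. unfold psi2, B. eapply Rle_trans; [apply Rabs_triang|].
    apply Rplus_le_compat. apply HM; lra.
    rewrite Rabs_mult. pose proof (SIN_bound x). pose proof (Rabs_pos a1).
    assert (Rabs (sin x) <= 1) by (apply Rabs_le; lra). nra. }
  destruct (MVT_gen psi 0 t psi1) as [c [Hc Ec]].
  { intros x _. apply Hp1. }
  { intros x _. apply (der_cont psi psi1), Hp1. }
  destruct (MVT_gen psi1 0 c psi2) as [e [He Ee]].
  { intros x _. apply Hp2. }
  { intros x _. apply (der_cont psi1 psi2), Hp2. }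
  assert (Z0 : psi 0 = 0) by (unfold psi; rewrite sin_0; ring).
  assert (Z1 : psi1 0 = 0) by (unfold psi1, a1; rewrite cos_0; ring).
  rewrite Z0 in Ec. rewrite Z1 in Ee.
  change (phi t - phi 0 - a1 * sin t) with (psi t).
  replace (psi t) with (psi2 e * c * t) by (rewrite <- (Rminus_0_r (psi t)), Ec,
     <- (Rminus_0_r (psi1 c)), Ee; ring).
  assert (He' : - PI <= e <= PI).
  { unfold Rmin, Rmax in *. destruct (Rle_dec 0 t), (Rle_dec 0 c); lra. }
  assert (Hct : Rabs c <= Rabs t).
  { unfold Rmin, Rmax in *. destruct (Rle_dec 0 t); apply Rabs_le; split;
    rewrite ?Rabs_right, ?Rabs_left by lra; lra || (rewrite Rabs_left; lra). }
  rewrite !Rabs_mult. specialize (Hb e He').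
  replace (t ^ 2) with (Rabs t * Rabs t) by (rewrite <- Rabs_mult, Rabs_right; [ring| nra]).
  pose proof (Rabs_pos c). pose proof (Rabs_pos t). pose proof (Rabs_pos (psi2 e)).
  rewrite <- Rmult_assoc. apply Rmult_le_compat; try nra.
Qed.

Lemma div_bound X K d n : 0 < d -> X <= K * d ^ n -> X / d ^ S n <= K / d.
Proof.
  intros Hd H. assert (0 < d ^ S n) by (apply pow_lt; auto).
  apply Rle_trans with (K * d ^ n / d ^ S n).
  - unfold Rdiv. apply Rmult_le_compat_r; [left; apply Rinv_0_lt_compat; auto| auto].
  - right. simpl. field. repeat split; try lra; apply pow_nonzero; lra.
Qed.

Lemma pw e s n : 0 <= s <= 2 * e -> s ^ n <= 2 ^ n * e ^ n.
Proof. intros H. rewrite <- Rpow_mult_distr. apply pow_incr. lra. Qed.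

Lemma epow e m n : 0 <= e <= 1 -> (m <= n)%nat -> e ^ n <= e ^ m.
Proof. intros H Hmn. induction Hmn; [lra|]. simpl. pose proof (pow_le e m0 ltac:(lra)). nra. Qed.

Section TB.
Variables (e s d c : R).
Hypotheses (He : 0 < e <= 1) (Hs : 0 <= s <= 2 * e) (Hd : e ^ 2 <= d)
  (Hc : 0 <= 1 - c <= d) (Hc2 : 1 - c <= 2).
Let Hd0 : 0 < d. Proof. nra. Qed.
Let Hsp n : 0 <= s ^ n. Proof. apply pow_le; lra. Qed.
Let Hep n : 0 <= e ^ n. Proof. apply pow_le; lra. Qed.

Lemma tb41 : s ^ 4 / d ^ 1 * (1 - c) <= 128 * e ^ 3 / d.
Proof.
  replace (s ^ 4 / d ^ 1 * (1 - c)) with (s ^ 4 * (1 - c) / d ^ 1) by (field; lra).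
  apply div_bound; auto. simpl (d ^ 0). rewrite Rmult_1_r.
  pose proof (pw e s 4 Hs). pose proof (epow e 3 4 ltac:(lra) ltac:(lia)).
  apply Rle_trans with (2 ^ 4 * e ^ 4 * 2). apply Rmult_le_compat; auto; lra. pose proof (Hep 3). simpl in *; lra.
Qed.

Lemma tbgen a n K : s ^ a <= K * d ^ n -> s ^ a / d ^ S (S n) * (1 - c) <= K / d.
Proof.
  intros H.
  replace (s ^ a / d ^ S (S n) * (1 - c)) with (s ^ a * (1 - c) / d ^ S (S n)) by (field; repeat split; try lra; apply pow_nonzero; lra).
  apply div_bound; auto. simpl. replace (K * (d * d ^ n)) with ((K * d ^ n) * d) by ring.
  apply Rmult_le_compat; auto; lra.
Qed.

Lemma e2d n : e ^ (2 * n) <= d ^ n.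
Proof. rewrite pow_mult. apply pow_incr. split; [apply pow_le; lra| exact Hd]. Qed.

Lemma tb52 : s ^ 5 / d ^ 2 * (1 - c) <= 128 * e ^ 3 / d.
Proof.
  apply (tbgen 5 0). simpl (d ^ 0). rewrite Rmult_1_r.
  pose proof (pw e s 5 Hs). pose proof (epow e 3 5 ltac:(lra) ltac:(lia)). pose proof (Hep 3). simpl in *; lra.
Qed.
Lemma tb42 : s ^ 4 / d ^ 2 * (1 - c) <= 128 * e ^ 3 / d.
Proof.
  apply (tbgen 4 0). simpl (d ^ 0). rewrite Rmult_1_r.
  pose proof (pw e s 4 Hs). pose proof (epow e 3 4 ltac:(lra) ltac:(lia)). pose proof (Hep 3). simpl in *; lra.
Qed.
Lemma tb63 : s ^ 6 / d ^ 3 * (1 - c) <= 128 * e ^ 3 / d.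
Proof.
  apply (tbgen 6 1). apply Rle_trans with (2 ^ 6 * e ^ 6); [apply pw; auto|].
  replace (2 ^ 6 * e ^ 6) with ((64 * e) * e ^ 3 * (e ^ 2) ^ 1) by ring.
  pose proof (Hep 3).
  apply Rmult_le_compat.
  - apply Rmult_le_pos; [nra|lra].
  - apply pow_le; nra.
  - nra.
  - apply pow_incr; split; [nra|exact Hd].
Qed.
Lemma tb53 : s ^ 5 / d ^ 3 * (1 - c) <= 128 * e ^ 3 / d.
Proof.
  apply (tbgen 5 1). apply Rle_trans with (2 ^ 5 * e ^ 5); [apply pw; auto|].
  replace (2 ^ 5 * e ^ 5) with (32 * e ^ 3 * (e ^ 2) ^ 1) by ring.
  pose proof (Hep 3).
  apply Rmult_le_compat.
  - apply Rmult_le_pos; [nra|lra].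
  - apply pow_le; nra.
  - nra.
  - apply pow_incr; split; [nra|exact Hd].
Qed.
Lemma tb74 : s ^ 7 / d ^ 4 * (1 - c) <= 128 * e ^ 3 / d.
Proof.
  apply (tbgen 7 2). apply Rle_trans with (2 ^ 7 * e ^ 7); [apply pw; auto|].
  replace (2 ^ 7 * e ^ 7) with (128 * e ^ 3 * (e ^ 2) ^ 2) by ring.
  pose proof (Hep 3).
  apply Rmult_le_compat.
  - apply Rmult_le_pos; [nra|lra].
  - apply pow_le; nra.
  - nra.
  - apply pow_incr; split; [nra|exact Hd].
Qed.
End TB.

Lemma Frc_bound r c : / 2 <= r < 1 -> -1 <= c <= 1 ->
  Rabs (Frc r c) * (1 - c) <= 896 * (1 - r) ^ 3 / (1 + r ^ 2 - 2 * r * c).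
Proof.
  intros Hr Hc.
  set (e := 1 - r). set (s := 1 - r ^ 2). set (d := 1 + r ^ 2 - 2 * r * c).
  assert (He : 0 < e <= 1) by (unfold e; lra).
  assert (Hs : 0 <= s <= 2 * e) by (unfold s, e; nra).
  assert (Hd : e ^ 2 <= d) by (unfold e, d; nra).
  assert (Hcd : 0 <= 1 - c <= d) by (unfold d; nra).
  assert (Hc2 : 1 - c <= 2) by lra.
  assert (Hd0 : 0 < d) by nra.
  assert (Pos : forall a b, 0 <= s ^ a / d ^ b * (1 - c)).
  { intros a b. apply Rmult_le_pos; [|lra]. unfold Rdiv. apply Rmult_le_pos.
    apply pow_le; lra. left; apply Rinv_0_lt_compat, pow_lt; lra. }
  assert (s ^ 4 / d ^ 1 * (1 - c) <= 128 * e ^ 3 / d) by (eapply tb41; eauto).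
  assert (s ^ 5 / d ^ 2 * (1 - c) <= 128 * e ^ 3 / d) by (eapply tb52; eauto).
  assert (s ^ 4 / d ^ 2 * (1 - c) <= 128 * e ^ 3 / d) by (eapply tb42; eauto).
  assert (s ^ 6 / d ^ 3 * (1 - c) <= 128 * e ^ 3 / d) by (eapply tb63; eauto).
  assert (s ^ 5 / d ^ 3 * (1 - c) <= 128 * e ^ 3 / d) by (eapply tb53; eauto).
  assert (s ^ 7 / d ^ 4 * (1 - c) <= 128 * e ^ 3 / d) by (eapply tb74; eauto).
  pose proof (Pos 4%nat 1%nat). pose proof (Pos 5%nat 2%nat). pose proof (Pos 4%nat 2%nat).
  pose proof (Pos 6%nat 3%nat). pose proof (Pos 5%nat 3%nat). pose proof (Pos 7%nat 4%nat).
  rewrite <- (Rabs_right (1 - c)) by lra. rewrite <- Rabs_mult.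
  assert (E : Frc r c * (1 - c) =
     / 2 * (s ^ 4 / d ^ 1 * (1 - c)) + 3 / 2 * (s ^ 5 / d ^ 2 * (1 - c))
     - 3 / 2 * (s ^ 4 / d ^ 2 * (1 - c)) + 3 / 2 * (s ^ 6 / d ^ 3 * (1 - c))
     - 3 / 2 * (s ^ 5 / d ^ 3 * (1 - c)) + / 2 * (s ^ 7 / d ^ 4 * (1 - c))).
  { unfold Frc. fold s. fold d. field. lra. }
  rewrite E. replace (896 * (1 - r) ^ 3 / d) with (7 * (128 * e ^ 3 / d)) by (unfold e; field; lra).
  apply Rabs_le. split; lra.
Qed.


Lemma main_est (phi : R -> R) : test_fun phi ->
  exists C, 0 <= C /\ forall r, / 2 <= r < 1 ->
    Rabs (pair_r F2_formula r phi - delta1 phi) <= C * (1 - r) ^ 2.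
Proof.
  intros [Hphi _].
  destruct (psi_bound phi Hphi) as [M [HM0 HM]].
  set (a1 := Derive phi 0). set (p0 := phi 0).
  set (K := 16 * M * 896).
  exists K. split; [unfold K; lra|].
  intros r Hr.
  assert (Hr0 : 0 <= r < 1) by lra.
  assert (Hcphi : forall t, continuous phi t).
  { intros t. apply (ex_derive_continuous phi). exact (Hphi 1%nat t). }
  assert (HcF : forall t, continuous (fun t => Frc r (cos t)) t) by (intros; apply Frc_cos_cont; auto).
  assert (Hcsin : forall t, continuous sin t).
  { intros t. apply (ex_derive_continuous sin). auto_derive; auto. }
  set (psi := fun t => phi t - p0 - a1 * sin t).
  assert (Hcpsi : forall t, continuous psi t).
  { intros t. unfold psi.
    apply (continuous_minus (fun t => phi t - p0) (fun t => a1 * sin t)).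
    apply (continuous_minus phi (fun _ => p0)). apply Hcphi. apply continuous_const.
    apply (continuous_scal_r a1 sin). apply Hcsin. }
  set (g := fun t => Frc r (cos t) * psi t).
  assert (Hcg : forall t, continuous g t).
  { intros t. apply (continuous_mult (fun t => Frc r (cos t)) psi); auto. }
  assert (Exg : ex_RInt g (- PI) PI) by (apply (ex_RInt_continuous g); intros; apply Hcg).
  assert (Exs : ex_RInt (fun t => Frc r (cos t) * sin t) (- PI) PI).
  { apply (ex_RInt_continuous (fun t => Frc r (cos t) * sin t)); intros.
    apply (continuous_mult (fun t => Frc r (cos t)) sin); auto. }
  assert (IS : is_RInt (fun t => Frc r (cos t) * sin t) (- PI) PI 0).
  { pose proof (RInt_correct _ _ _ Exs) as H.
    rewrite (odd_int _ Exs) in H; [exact H|].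
    intros t. rewrite cos_neg, sin_neg. ring. }
  assert (IF := int_F r Hr0).
  assert (Ig := RInt_correct g (- PI) PI Exg).
  assert (Itot : is_RInt (fun t => Frc r (cos t) * phi t) (- PI) PI
      (RInt g (- PI) PI + (p0 * (2 * PI) + a1 * 0))).
  { eapply is_RInt_ext; [|apply (is_RInt_plus _ _ _ _ _ _ Ig
       (is_RInt_plus _ _ _ _ _ _ (is_RInt_scal _ _ _ p0 _ IF) (is_RInt_scal _ _ _ a1 _ IS)))].
    intros t _. unfold g, psi, plus, scal; simpl. unfold mult; simpl. ring. }
  assert (Hpair : pair_r F2_formula r phi = (RInt g (- PI) PI + p0 * (2 * PI)) / (2 * PI)).
  { unfold pair_r. rewrite (RInt_ext _ (fun t => Frc r (cos t) * phi t)).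
    rewrite (is_RInt_unique _ _ _ _ Itot). f_equal. ring.
    intros t _. rewrite F2_polar. reflexivity. }
  assert (HPI := PI_RGT_0).
  set (e := 1 - r). set (s := 1 - r ^ 2).
  assert (Hs : 0 < s) by (unfold s; nra).
  set (h := fun t => (K * e ^ 3 / s) * ((1 - r ^ 2) / (1 + r ^ 2 - 2 * r * cos t))).
  assert (Ih : is_RInt h (- PI) PI ((K * e ^ 3 / s) * (2 * PI))).
  { apply (is_RInt_scal _ _ _ (K * e ^ 3 / s) _ (int_P r Hr0)). }
  assert (Exag : ex_RInt (fun t => Rabs (g t)) (- PI) PI).
  { apply (ex_RInt_continuous (fun t => Rabs (g t))); intros. apply (continuous_Rabs_comp g); auto. }
  assert (Hle : RInt (fun t => Rabs (g t)) (- PI) PI <= RInt h (- PI) PI).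
  { apply RInt_le; [lra| exact Exag | eexists; exact Ih|].
    intros t Ht. unfold g, h.
    pose proof (COS_bound t) as Hc.
    pose proof (Frc_bound r (cos t) Hr Hc) as HF.
    pose proof (HM t ltac:(lra)) as Hpsi. pose proof (cos_quad t ltac:(lra)) as Hq.
    assert (Hd := d_pos' r (cos t) Hr0 Hc).
    rewrite Rabs_mult.
    apply Rle_trans with (Rabs (Frc r (cos t)) * (16 * M * (1 - cos t))).
    { apply Rmult_le_compat_l; [apply Rabs_pos|]. unfold psi, p0, a1.
      eapply Rle_trans; [exact Hpsi|]. nra. }
    replace (K * e ^ 3 / s * ((1 - r ^ 2) / (1 + r ^ 2 - 2 * r * cos t)))
       with (16 * M * (896 * (1 - r) ^ 3 / (1 + r ^ 2 - 2 * r * cos t)))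
       by (unfold K, e, s; field; split; nra).
    replace (Rabs (Frc r (cos t)) * (16 * M * (1 - cos t)))
       with (16 * M * (Rabs (Frc r (cos t)) * (1 - cos t))) by ring.
    apply Rmult_le_compat_l; [lra| exact HF]. }
  rewrite (is_RInt_unique _ _ _ _ Ih) in Hle.
  assert (Hab := abs_RInt_le g (- PI) PI ltac:(lra) Exg).
  unfold delta1. fold p0. rewrite Hpair.
  replace ((RInt g (- PI) PI + p0 * (2 * PI)) / (2 * PI) - p0)
     with (RInt g (- PI) PI / (2 * PI)) by (field; lra).
  unfold Rdiv. rewrite Rabs_mult, (Rabs_right (/ (2 * PI))) by (left; apply Rinv_0_lt_compat; lra).
  apply Rle_trans with (K * e ^ 3 / s).
  { apply Rle_trans with ((K * e ^ 3 / s * (2 * PI)) * / (2 * PI)).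
    apply Rmult_le_compat_r; [left; apply Rinv_0_lt_compat; lra| lra].
    right; field; lra. }
  replace (K * e ^ 3 / s) with (K * e ^ 2 * (e / s)) by (field; lra).
  replace ((1 - r) ^ 2) with (e ^ 2) by reflexivity.
  rewrite <- (Rmult_1_r (K * e ^ 2)) at 2.
  apply Rmult_le_compat_l. apply Rmult_le_pos; [unfold K; lra| apply pow2_ge_0].
  apply (Rmult_le_reg_r s); auto. unfold Rdiv. rewrite Rmult_assoc, Rinv_l by lra.
  unfold s, e; nra.
Qed.

Lemma lim_bound (f : R -> R) l C : 0 <= C ->
  (forall r, / 2 <= r < 1 -> Rabs (f r - l) <= C * (1 - r)) ->
  filterlim f (at_left 1) (locally l).
Proof.
  intros HC Hb. apply filterlim_locally. intros eps.
  assert (Hd : 0 < Rmin (/ 2) (eps / (C + 1))).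
  { apply Rmin_pos; [lra|]. apply Rdiv_lt_0_compat; [apply cond_pos| lra]. }
  exists (mkposreal _ Hd). intros y Hy Hlt.
  unfold ball in Hy |- *; simpl in Hy |- *.
  unfold AbsRing_ball, abs, minus, plus, opp in Hy |- *; simpl in Hy |- *.
  rewrite Rabs_left in Hy by lra.
  assert (H1 : / 2 <= y) by (pose proof (Rmin_l (/2) (eps / (C + 1))); lra).
  assert (H2 : 1 - y < eps / (C + 1)) by (pose proof (Rmin_r (/2) (eps / (C + 1))); lra).
  specialize (Hb y (conj H1 Hlt)).
  replace (f y + - l) with (f y - l) by ring.
  eapply Rle_lt_trans; [exact Hb|].
  pose proof (cond_pos eps).
  apply Rle_lt_trans with ((C + 1) * (1 - y)); [nra|].
  apply (Rmult_lt_reg_r (/ (C + 1))). apply Rinv_0_lt_compat; lra.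
  replace ((C + 1) * (1 - y) * / (C + 1)) with (1 - y) by (field; lra).
  exact H2.
Qed.

Theorem theorem3p2 :
  (forall u v : R -> R -> R,
     is_poisson_kernel 2 u -> is_poisson_kernel 2 v ->
     forall x y, in_disc x y -> u x y = v x y) ->
  is_poisson_kernel 2 F2_formula /\
  (forall u : R -> R -> R, is_poisson_kernel 2 u ->
     forall x y, in_disc x y -> u x y = F2_formula x y).
Proof.
  intros Huniq.
  assert (HK : is_poisson_kernel 2 F2_formula).
  { split; [exact F2_smooth|]. split; [exact F2_pde|]. split.
    - intros phi Hphi. destruct (main_est phi Hphi) as [C [HC Hb]].
      apply (lim_bound _ _ C HC). intros r Hr.
      eapply Rle_trans; [apply Hb; auto|].
      apply Rmult_le_compat_l; [lra|]. nra.
    - intros phi Hphi. destruct (main_est phi Hphi) as [C [HC Hb]].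
      apply (lim_bound _ _ C HC). intros r Hr.
      replace ((pair_r F2_formula r phi - delta1 phi) / (1 - r) - 0)
        with ((pair_r F2_formula r phi - delta1 phi) * / (1 - r)) by (unfold Rdiv; ring).
      rewrite Rabs_mult, (Rabs_right (/ (1 - r))) by (left; apply Rinv_0_lt_compat; lra).
      apply Rle_trans with (C * (1 - r) ^ 2 * / (1 - r)).
      + apply Rmult_le_compat_r; [left; apply Rinv_0_lt_compat; lra| apply Hb; auto].
      + right. field. lra. }
  split; [exact HK|].
  intros u Hu x y Hxy. apply Huniq; auto.
Qed.
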